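(* The restriction functor $R:\mathbb T({}_H\mathcal M)\to{}_H\mathcal M^{par}$, $R(M,T)=(T(M),\pi_T)$ (acting as the identity on morphisms), is an equivalence of categories.
   Context: Throughout, $k$ is a field and $H$ is a Hopf algebra over $k$ with bijective antipode $S$ and Sweedler notation $\Delta(h)=h_{(1)}\otimes h_{(2)}$. A partial representation of $H$ on a vector space $M$ is a linear map $\pi:H\to\mathrm{End}_k(M)$ satisfying, for all $h,k\in H$: - $\pi(1_H)=\mathrm{id}$; - $\pi(h)\pi(k_{(1)})\pi(S(k_{(2)}))=\pi(hk_{(1)})\pi(S(k_{(2)}))$; - $\pi(h_{(1)})\pi(S(h_{(2)}))\pi(k)=\pi(h_{(1)})\pi(S(h_{(2)})k)$; - $\pi(h)\pi(S(k_{(1)}))\pi(k_{(2)})=\pi(hS(k_{(1)}))\pi(k_{(2)})$; - $\pi(S(h_{(1)}))\pi(h_{(2)})\pi(k)=\pi(S(h_{(1)}))\pi(h_{(2)}k)$. The pair $(M,\pi)$ is then a partial $H$-module. Partial $H$-modules form the category ${}_H\mathcal M^{par}$, whose morphisms are linear maps $f$ with $f\circ\pi(h)=\pi'(h)\circ f$ for all $h$. For a left $H$-module $M$ (action $\triangleright$) and a linear $T:M\to M$, put $T_h(m)=h_{(1)}\triangleright T(S(h_{(2)})\triangleright m)$. A projection $T$ ($T^2=T$) satisfies the c-condition if $T_h\circ T=T\circ T_h$ for all $h\in H$. The category $\mathbb T({}_H\mathcal M)$ is defined as follows: - objects are pairs $(M,T)$ with $M$ a left $H$-module and $T$ a linear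 projection on $M$ satisfying the c-condition; - morphisms $f:(M,T)\to(N,S)$ are linear maps $f:T(M)\to S(N)$ with $f(T(h\triangleright m))=S(h\triangleright f(m))$ for all $h\in H$, $m\in T(M)$. For such $(M,T)$, $\pi_T(h)(m)=T(h\triangleright m)$ ($m\in T(M)$) makes $T(M)$ a partial $H$-module. *)

(* Defs.v *)
From HB Require Import structures.
From mathcomp Require Import all_boot all_order all_algebra.
Unset Implicit Arguments.
Unset Strict Implicit.
Unset Printing Implicit Defensive.
Import GRing.Theory.
Local Open Scope ring_scope.

Section HopfDefs.
Variable k : fieldType.
Variable H : algType k.

(** Elements of H (x) H are represented by finite lists of simple tensors
    [p.1 (x) p.2]; the coproduct is [Delta : H -> seq (H * H)], so that
    Sweedler sums  sum h_(1) .. h_(2)  become  \sum_(p <- Delta h) .. p.1 .. p.2. *)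

Definition lin_functional (f : H -> k) : Prop :=
  forall a x y, f (a *: x + y) = a * f x + f y.

Definition lin_map {U V : lmodType k} (f : U -> V) : Prop :=
  forall a x y, f (a *: x + y) = a *: f x + f y.

(** Equality in H (x) H (over a field, linear functionals separate tensors). *)
Definition tensor_eq (s t : seq (H * H)) : Prop :=
  forall f g, lin_functional f -> lin_functional g ->
    \sum_(p <- s) f p.1 * g p.2 = \sum_(p <- t) f p.1 * g p.2.

Variable Delta : H -> seq (H * H).
Variable eps : H -> k.
Variable S : H -> H.

Record is_hopf : Prop := {
  hopf_Delta_lin : forall a x y,
    tensor_eq (Delta (a *: x + y)) ([seq (a *: p.1, p.2) | p <- Delta x] ++ Delta y);
  hopf_coassoc : forall h f g l,
    lin_functional f -> lin_functional g -> lin_functional l ->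
    \sum_(p <- Delta h) (\sum_(q <- Delta p.1) f q.1 * g q.2) * l p.2
    = \sum_(p <- Delta h) f p.1 * (\sum_(q <- Delta p.2) g q.1 * l q.2);
  hopf_eps_lin : lin_functional eps;
  hopf_counit_l : forall h, \sum_(p <- Delta h) eps p.1 *: p.2 = h;
  hopf_counit_r : forall h, \sum_(p <- Delta h) eps p.2 *: p.1 = h;
  hopf_Delta_mul : forall x y,
    tensor_eq (Delta (x * y)) [seq (p.1 * q.1, p.2 * q.2) | p <- Delta x, q <- Delta y];
  hopf_Delta_1 : tensor_eq (Delta 1) [:: (1, 1)];
  hopf_eps_mul : forall x y, eps (x * y) = eps x * eps y;
  hopf_eps_1 : eps 1 = 1;
  hopf_S_lin : lin_map S;
  hopf_antipode_l : forall h, \sum_(p <- Delta h) S p.1 * p.2 = (eps h)%:A;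
  hopf_antipode_r : forall h, \sum_(p <- Delta h) p.1 * S p.2 = (eps h)%:A
}.

Record is_Hmod {M : lmodType k} (act : H -> M -> M) : Prop := {
  hmod_lin : forall h, lin_map (act h);
  hmod_linH : forall a x y m, act (a *: x + y) m = a *: act x m + act y m;
  hmod_one : forall m, act 1 m = m;
  hmod_mul : forall x y m, act (x * y) m = act x (act y m)
}.

Record is_partial_rep {V : lmodType k} (pi : H -> V -> V) : Prop := {
  prep_lin : forall h, lin_map (pi h);
  prep_linH : forall a x y v, pi (a *: x + y) v = a *: pi x v + pi y v;
  prep_one : forall v, pi 1 v = v;
  prep_ax1 : forall h x v, \sum_(p <- Delta x) pi h (pi p.1 (pi (S p.2) v))
                    = \sum_(p <- Delta x) pi (h * p.1) (pi (S p.2) v);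
  prep_ax2 : forall h x v, \sum_(p <- Delta h) pi p.1 (pi (S p.2) (pi x v))
                    = \sum_(p <- Delta h) pi p.1 (pi (S p.2 * x) v);
  prep_ax3 : forall h x v, \sum_(p <- Delta x) pi h (pi (S p.1) (pi p.2 v))
                    = \sum_(p <- Delta x) pi (h * S p.1) (pi p.2 v);
  prep_ax4 : forall h x v, \sum_(p <- Delta h) pi (S p.1) (pi p.2 (pi x v))
                    = \sum_(p <- Delta h) pi (S p.1) (pi (p.2 * x) v)
}.

Definition Tconj {M : lmodType k} (act : H -> M -> M) (T : M -> M) (h : H) (m : M) : M :=
  \sum_(p <- Delta h) act p.1 (T (act (S p.2) m)).

Record TObj := {
  t_car : lmodType k;
  t_act : H -> t_car -> t_car;
  t_act_mod : is_Hmod t_act;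
  t_T : t_car -> t_car;
  t_T_lin : lin_map t_T;
  t_T_idem : forall m, t_T (t_T m) = t_T m;
  t_T_c : forall h m, Tconj t_act t_T h (t_T m) = t_T (Tconj t_act t_T h m)
}.


(** The subspace T(M) = {m | T m = m} as a k-vector space. *)
Definition fixT (X : TObj) : {pred t_car X} := fun x => t_T X x == x.

Lemma fixT_submod (X : TObj) : GRing.submod_closed (fixT X).
Proof.
split.
  rewrite /fixT unfold_in /=; apply/eqP.
  have h := t_T_lin X 1 0 0; rewrite !scale1r !addr0 in h.
  by apply: (addrI (t_T X 0)); rewrite addr0 -h.
move=> a x y; rewrite /fixT !unfold_in /= => /eqP hx /eqP hy.
by apply/eqP; rewrite t_T_lin hx hy.
Qed.

HB.instance Definition _ (X : TObj) :=
  GRing.isSubmodClosed.Build k (t_car X) (fixT X) (fixT_submod X).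

Definition img (X : TObj) := {x : t_car X | x \in fixT X}.
HB.instance Definition _ (X : TObj) := [isSub for (@proj1_sig _ _ : img X -> t_car X)].
HB.instance Definition _ (X : TObj) := [Choice of img X by <:].
HB.instance Definition _ (X : TObj) := [SubChoice_isSubLmodule of img X by <:].

Lemma piT_subproof (X : TObj) (y : t_car X) : t_T X y \in fixT X.
Proof. by rewrite /fixT unfold_in /= t_T_idem. Qed.

Definition piT (X : TObj) (h : H) (m : img X) : img X :=
  Sub (t_T X (t_act X h (val m))) (piT_subproof X (t_act X h (val m))).

Definition Hom_T (X Y : TObj) (f : img X -> img Y) : Prop :=
  lin_map f /\ forall h m, val (f (piT X h m)) = t_T Y (t_act Y h (val (f m))).

Record PMod := {
  p_car : lmodType k;
  p_pi : H -> p_car -> p_car;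
  p_ax : is_partial_rep p_pi
}.


Definition Hom_P (A B : PMod) (f : p_car A -> p_car B) : Prop :=
  lin_map f /\ forall h v, f (p_pi A h v) = p_pi B h (f v).

End HopfDefs.

(** Equivalence of categories, for two categories whose objects have carriers
    C1 X / C2 A, whose morphisms are the functions satisfying Hom1 / Hom2,
    with composition = function composition and identities = id.
    (Fo, Fm) must be a functor, and there must be a functor (Go, Gm) with natural
    isomorphisms  eta : Id => G o F  and  epsi : F o G => Id. *)
Definition is_functor {O1 O2 : Type} {C1 : O1 -> Type} {C2 : O2 -> Type}
  (Hom1 : forall X Y, (C1 X -> C1 Y) -> Prop)
  (Hom2 : forall A B, (C2 A -> C2 B) -> Prop)
  {Fo : O1 -> O2} (Fm : forall X Y, (C1 X -> C1 Y) -> (C2 (Fo X) -> C2 (Fo Y))) : Prop :=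
  [/\ forall X Y f, Hom1 X Y f -> Hom2 (Fo X) (Fo Y) (Fm X Y f),
      forall X, Fm X X id =1 id &
      forall X Y Z f g, Hom1 X Y f -> Hom1 Y Z g ->
        Fm X Z (g \o f) =1 Fm Y Z g \o Fm X Y f].

Definition is_iso {O : Type} {C : O -> Type} (Hom : forall X Y, (C X -> C Y) -> Prop)
  {X Y : O} (f : C X -> C Y) : Prop :=
  Hom X Y f /\ exists g : C Y -> C X, [/\ Hom Y X g, g \o f =1 id & f \o g =1 id].

Definition is_equivalence {O1 O2 : Type} {C1 : O1 -> Type} {C2 : O2 -> Type}
  (Hom1 : forall X Y, (C1 X -> C1 Y) -> Prop)
  (Hom2 : forall A B, (C2 A -> C2 B) -> Prop)
  (Fo : O1 -> O2) (Fm : forall X Y, (C1 X -> C1 Y) -> (C2 (Fo X) -> C2 (Fo Y))) : Prop :=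
  is_functor Hom1 Hom2 Fm /\
  exists (Go : O2 -> O1) (Gm : forall A B, (C2 A -> C2 B) -> (C1 (Go A) -> C1 (Go B))),
    is_functor Hom2 Hom1 Gm /\
    (exists eta : forall X, C1 X -> C1 (Go (Fo X)),
      (forall X, is_iso Hom1 (eta X)) /\
      (forall X Y f, Hom1 X Y f -> eta Y \o f =1 Gm _ _ (Fm X Y f) \o eta X)) /\
    (exists epsi : forall A, C2 (Fo (Go A)) -> C2 A,
      (forall A, is_iso Hom2 (epsi A)) /\
      (forall A B g, Hom2 A B g -> epsi B \o Fm _ _ (Gm A B g) =1 g \o epsi A)).

(* Main.v *)
Require Import Defs.
From HB Require Import structures.
From mathcomp Require Import all_boot all_order all_algebra.
From mathcomp Require Import boolp classical_sets.
Set Implicit Arguments. Unset Strict Implicit. Unset Printing Implicit Defensive.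
Import GRing.Theory.
Local Open Scope ring_scope.
Local Open Scope classical_set_scope.
Section LinMap.
Variable k : fieldType.
Variables U W : lmodType k.
Variable f : U -> W.
Hypothesis hf : lin_map k f.
Lemma linm0 : f 0 = 0.
Proof. by have := hf 1 0 0; rewrite !scale1r addr0 => h; apply: (addrI (f 0)); rewrite addr0 -h. Qed.
Lemma linmD x y : f (x + y) = f x + f y.
Proof. by have := hf 1 x y; rewrite !scale1r. Qed.
Lemma linmZ a x : f (a *: x) = a *: f x.
Proof. by have := hf a x 0; rewrite !addr0 linm0 addr0. Qed.
Lemma linmN x : f (- x) = - f x.
Proof. by rewrite -scaleN1r linmZ scaleN1r. Qed.
Lemma linmB x y : f (x - y) = f x - f y.
Proof. by rewrite linmD linmN. Qed.
Lemma linm_sum (I : Type) (r : seq I) (F : I -> U) :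
  f (\sum_(i <- r) F i) = \sum_(i <- r) f (F i).
Proof.
elim: r => [|i r IH]; first by rewrite !big_nil linm0.
by rewrite !big_cons linmD IH.
Qed.
End LinMap.

Section LinAlg.
Variable k : fieldType.
Variable V : lmodType k.

Definition linf (f : V -> k) := forall a x y, f (a *: x + y) = a * f x + f y.

Lemma exists_functional (u : V) : u != 0 -> exists g, linf g /\ g u = 1.
Proof.
move=> u0.
pose P (A : set V) := (forall a x y, A x -> A y -> A (a *: x + y)) /\ ~ A u.
have [A [[Acl Au] Amax]] : exists A, P A /\ forall B, (A `<` B)%classic -> ~ P B.
  apply: Zorn_bigcup => F FP Ftot; split.
    move=> a x y [X FX Xx] [Y FY Yy].
    have [XY|YX] := Ftot X Y FX FY.
      exists Y => //; apply: (FP Y FY).1 => //; exact: XY.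
    exists X => //; apply: (FP X FX).1 => //; exact: YX.
  by move=> [X FX Xu]; apply: (FP X FX).2.
have A0 : A 0.
  have [//|nA0] := pselect (A 0).
  have Aempty : forall x, ~ A x.
    by move=> x Ax; apply: nA0; have := Acl (-1) x x Ax Ax; rewrite scaleN1r addNr.
  have Hp : A `<` [set 0].
    split; first by move=> x /Aempty.
    by move=> /(_ 0 erefl).
  have Hq : P [set 0].
    split.
      by move=> a x y /= -> ->; rewrite scaler0 addr0.
    by move=> /= /eqP; rewrite (negbTE u0).
  by exfalso; exact: Amax Hp Hq.
have decomp : forall v, exists a, A (v - a *: u).
  move=> v; have [Av|nAv] := pselect (A v).
    by exists 0; rewrite scale0r subr0.
  pose B := [set x | exists c a, A c /\ x = c + a *: v].
  have Bcl : forall a x y, B x -> B y -> B (a *: x + y).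
    move=> a x y [c1 [a1 [Ac1 ->]]] [c2 [a2 [Ac2 ->]]].
    exists (a *: c1 + c2), (a * a1 + a2); split; first exact: Acl.
    by rewrite scalerDr scalerA scalerDl addrACA.
  have Bu : B u.
    have [//|nBu] := pselect (B u).
    have Hp : A `<` B.
      split.
        by move=> x Ax; exists x, 0; rewrite scale0r addr0.
      move=> /(_ v) H2; apply: nAv; apply: H2; exists 0, 1; split => //; by rewrite add0r scale1r.
    by exfalso; apply: Amax Hp _; split.
  case: Bu => c [a [Ac ua]].
  have a0 : a != 0.
    by apply/eqP => a0; apply: Au; rewrite ua a0 scale0r addr0.
  exists a^-1; rewrite ua scalerDr scalerA mulVf // scale1r opprD addrCA subrr addr0.
  by rewrite -scaleNr -[_ *: c]addr0; apply: Acl.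
have uniq : forall v a b, A (v - a *: u) -> A (v - b *: u) -> a = b.
  move=> v a b Ha Hb; apply/eqP; apply: contraT => ab.
  have : A ((b - a) *: u).
    have := Acl (-1) _ _ Hb Ha; congr A.
    by rewrite scaleN1r scalerBl opprB addrA subrK.
  move=> H1; exfalso; apply: Au.
  have := Acl ((b - a)^-1) _ _ H1 A0; rewrite addr0 scalerA mulVf ?scale1r //.
  by rewrite subr_eq0 eq_sym.
pose g v := projT1 (cid (decomp v)).
have gP : forall v, A (v - g v *: u) by move=> v; exact: (projT2 (cid (decomp v))).
exists g; split.
  move=> a x y; apply: (uniq (a *: x + y)); first exact: gP.
  have := Acl a _ _ (gP x) (gP y); congr A.
  by rewrite scalerDl scalerBr scalerA opprD addrACA.
by apply: (uniq u); [exact: gP | rewrite scale1r subrr].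
Qed.

Lemma linf0 f : linf f -> f 0 = 0.
Proof. by move=> hf; have := hf 1 0 0; rewrite scale1r addr0 mul1r => h; apply: (addrI (f 0)); rewrite addr0 -h. Qed.
Lemma linfD f : linf f -> forall x y, f (x + y) = f x + f y.
Proof. by move=> hf x y; rewrite -[x]scale1r hf mul1r scale1r. Qed.
Lemma linfZ f : linf f -> forall a x, f (a *: x) = a * f x.
Proof. by move=> hf a x; rewrite -[a *: x]addr0 hf linf0 // addr0. Qed.
Lemma linf_sum f : linf f -> forall (I : Type) (r : seq I) (F : I -> V),
  f (\sum_(i <- r) F i) = \sum_(i <- r) f (F i).
Proof.
move=> hf I r F; elim: r => [|i r IH]; first by rewrite !big_nil linf0.
by rewrite !big_cons linfD // IH.
Qed.

Record lf := LF { lff :> V -> k; lfP : linf lff }.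

Definition projL (L : seq (V * lf)) (x : V) : V := \sum_(q <- L) q.2 x *: q.1.

Lemma finite_proj (ws : seq V) :
  exists L : seq (V * lf), forall w, w \in ws -> projL L w = w.
Proof.
elim: ws => [|w ws [L HL]]; first by exists [::].
have [Pw|Pw] := eqVneq (projL L w) w.
  by exists L => w'; rewrite inE => /orP[/eqP ->|/HL].
have u0 : w - projL L w != 0 by rewrite subr_eq0 eq_sym.
have [g [gl gu]] := exists_functional u0.
set u := w - projL L w in u0 gu *.
pose L' := [seq (q.1 - g q.1 *: u, q.2) | q <- L] ++ [:: (u, LF gl)].
have PL' x : projL L' x = projL L x + g (x - projL L x) *: u.
  rewrite /projL big_cat big_map big_seq1 /=.
  have Hg : g (x - \sum_(q <- L) q.2 x *: q.1) = g x - \sum_(q <- L) q.2 x * g q.1.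
    rewrite linfD // -scaleN1r linfZ // linf_sum // mulN1r; congr (_ - _).
    by apply: eq_bigr => q _; rewrite linfZ.
  have E : \sum_(j <- L) j.2 x *: (j.1 - g j.1 *: u)
      = \sum_(j <- L) j.2 x *: j.1 - \sum_(j <- L) (j.2 x * g j.1) *: u.
    by rewrite -sumrB; apply: eq_bigr => j _; rewrite scalerBr scalerA.
  by rewrite E Hg scalerBl scaler_suml addrAC addrA.
exists L' => w'; rewrite inE => /orP[/eqP ->|/HL Hw'].
  by rewrite PL' gu scale1r /u addrC subrK.
by rewrite PL' Hw' subrr linf0 // scale0r addr0.
Qed.


Lemma projL_sum (L : seq (V * lf)) (U : lmodType k) (f : V -> U) :
  lin_map k f -> forall x, f (projL L x) = \sum_(q <- L) q.2 x *: f q.1.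
Proof. by move=> hf x; rewrite /projL linm_sum //; apply: eq_bigr => q _; rewrite linmZ. Qed.

Variable M : lmodType k.

Definition bilin (G : V -> V -> M) :=
  (forall b, lin_map k (fun a => G a b)) /\ (forall a, lin_map k (G a)).

Definition trilin (F : V -> V -> V -> M) :=
  [/\ (forall b c, lin_map k (fun a => F a b c)),
      (forall a c, lin_map k (fun b => F a b c)) &
      (forall a b, lin_map k (F a b))].

Lemma expand2 L G : bilin G -> forall a b, projL L a = a -> projL L b = b ->
  G a b = \sum_(q <- L) \sum_(q' <- L) (q.2 a * q'.2 b) *: G q.1 q'.1.
Proof.
move=> [G1 G2] a b Pa Pb; rewrite -{1}Pa -{1}Pb.
rewrite (projL_sum L (G1 _)); apply: eq_bigr => q _.
rewrite (projL_sum L (G2 _)) scaler_sumr; apply: eq_bigr => q' _.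
by rewrite scalerA mulrC.
Qed.

Lemma expand3 L F : trilin F -> forall a b c, projL L a = a -> projL L b = b ->
  projL L c = c ->
  F a b c = \sum_(q <- L) \sum_(q' <- L) \sum_(q'' <- L)
              (q.2 a * q'.2 b * q''.2 c) *: F q.1 q'.1 q''.1.
Proof.
move=> [F1 F2 F3] a b c Pa Pb Pc; rewrite -{1}Pa -{1}Pb -{1}Pc.
rewrite (projL_sum L (F1 _ _)); apply: eq_bigr => q _.
rewrite (projL_sum L (F2 _ _)) scaler_sumr; apply: eq_bigr => q' _.
rewrite (projL_sum L (F3 _ _)) !scaler_sumr; apply: eq_bigr => q'' _.
by rewrite !scalerA.
Qed.

Lemma gen2 (s t : seq (V * V)) :
  (forall f g : lf, \sum_(p <- s) f p.1 * g p.2 = \sum_(p <- t) f p.1 * g p.2) ->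
  forall G, bilin G -> \sum_(p <- s) G p.1 p.2 = \sum_(p <- t) G p.1 p.2.
Proof.
move=> hst G hG.
have [L HL] := finite_proj (map fst s ++ map snd s ++ map fst t ++ map snd t).
have E (r : seq (V * V)) : {subset map fst r <= map fst s ++ map snd s ++ map fst t ++ map snd t} ->
  {subset map snd r <= map fst s ++ map snd s ++ map fst t ++ map snd t} ->
  \sum_(p <- r) G p.1 p.2 = \sum_(q <- L) \sum_(q' <- L) (\sum_(p <- r) q.2 p.1 * q'.2 p.2) *: G q.1 q'.1.
  move=> r1 r2.
  have Fx : forall p, p \in r -> projL L p.1 = p.1 /\ projL L p.2 = p.2.
    by move=> p pr; split; apply: HL; [apply: r1 | apply: r2]; exact: map_f.
  rewrite big_seq; under eq_bigr => p pr do
    rewrite (expand2 (L:=L) hG (proj1 (Fx p pr)) (proj2 (Fx p pr))).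
  rewrite -big_seq exchange_big; apply: eq_bigr => q _.
  rewrite exchange_big; apply: eq_bigr => q' _.
  by rewrite scaler_suml.
rewrite E; first last.
- by move=> x xs; rewrite !mem_cat xs !orbT.
- by move=> x xs; rewrite !mem_cat xs.
rewrite [RHS]E; first last.
- by move=> x xs; rewrite !mem_cat xs !orbT.
- by move=> x xs; rewrite !mem_cat xs !orbT.
by apply: eq_bigr => q _; apply: eq_bigr => q' _; rewrite hst.
Qed.

Lemma gen3 (s t : seq (V * V * V)) :
  (forall f g l : lf, \sum_(p <- s) f p.1.1 * g p.1.2 * l p.2
                    = \sum_(p <- t) f p.1.1 * g p.1.2 * l p.2) ->
  forall F, trilin F -> \sum_(p <- s) F p.1.1 p.1.2 p.2 = \sum_(p <- t) F p.1.1 p.1.2 p.2.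
Proof.
move=> hst F hF.
pose ws := [seq p.1.1 | p <- s] ++ [seq p.1.2 | p <- s] ++ [seq p.2 | p <- s] ++
           [seq p.1.1 | p <- t] ++ [seq p.1.2 | p <- t] ++ [seq p.2 | p <- t].
have [L HL] := finite_proj ws.
have E (r : seq (V * V * V)) : (forall p, p \in r -> [/\ p.1.1 \in ws, p.1.2 \in ws & p.2 \in ws]) ->
  \sum_(p <- r) F p.1.1 p.1.2 p.2 = \sum_(q <- L) \sum_(q' <- L) \sum_(q'' <- L)
     (\sum_(p <- r) q.2 p.1.1 * q'.2 p.1.2 * q''.2 p.2) *: F q.1 q'.1 q''.1.
  move=> rws.
  have Fx1 : forall p, p \in r -> projL L p.1.1 = p.1.1.
    by move=> p pr; case: (rws p pr) => w1 w2 w3; apply: HL.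
  have Fx2 : forall p, p \in r -> projL L p.1.2 = p.1.2.
    by move=> p pr; case: (rws p pr) => w1 w2 w3; apply: HL.
  have Fx3 : forall p, p \in r -> projL L p.2 = p.2.
    by move=> p pr; case: (rws p pr) => w1 w2 w3; apply: HL.
  rewrite big_seq; under eq_bigr => p pr do
    rewrite (expand3 (L:=L) hF (Fx1 p pr) (Fx2 p pr) (Fx3 p pr)).
  rewrite -big_seq exchange_big; apply: eq_bigr => q _.
  rewrite exchange_big; apply: eq_bigr => q' _.
  rewrite exchange_big; apply: eq_bigr => q'' _.
  by rewrite scaler_suml.
rewrite E; last first.
  by move=> p ps; rewrite /ws !mem_cat !(map_f _ ps) ?orbT.
rewrite [RHS]E; last first.
  by move=> p ps; rewrite /ws !mem_cat !(map_f _ ps) ?orbT.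
by apply: eq_bigr => q _; apply: eq_bigr => q' _; apply: eq_bigr => q'' _; rewrite hst.
Qed.

End LinAlg.

Local Close Scope classical_set_scope.

Lemma lin_comp (k : fieldType) (U V W : lmodType k) (f : V -> W) (g : U -> V) :
  lin_map k f -> lin_map k g -> lin_map k (fun x => f (g x)).
Proof. by move=> hf hg a x y; rewrite hg hf. Qed.

Section Hopf.
Variable k : fieldType.
Variable H : algType k.
Variables (Delta : H -> seq (H * H)) (eps : H -> k) (S : H -> H).
Hypothesis hH : is_hopf k H Delta eps S.

Lemma TE (s t : seq (H * H)) : tensor_eq k H s t ->
  forall (M : lmodType k) (G : H -> H -> M), bilin G ->
  \sum_(p <- s) G p.1 p.2 = \sum_(p <- t) G p.1 p.2.
Proof.
move=> hst M G hG; apply: gen2 => // f g.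
exact: hst (lfP f) (lfP g).
Qed.

Lemma VDL (M : lmodType k) (G : H -> H -> M) : bilin G ->
  lin_map k (fun x => \sum_(p <- Delta x) G p.1 p.2).
Proof.
move=> hG a x y; rewrite (TE (hopf_Delta_lin _ _ _ _ _ hH a x y) hG) big_cat big_map /=.
congr (_ + _); rewrite scaler_sumr; apply: eq_bigr => p _.
by rewrite (linmZ (hG.1 _)).
Qed.

Lemma VC (M : lmodType k) (F : H -> H -> H -> M) : trilin F -> forall h,
  \sum_(p <- Delta h) \sum_(q <- Delta p.1) F q.1 q.2 p.2
  = \sum_(p <- Delta h) \sum_(q <- Delta p.2) F p.1 q.1 q.2.
Proof.
move=> hF h.
pose s := [seq ((q.1, q.2), p.2) | p <- Delta h, q <- Delta p.1].
pose t := [seq ((p.1, q.1), q.2) | p <- Delta h, q <- Delta p.2].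
have Hyp : forall f g l : lf H, \sum_(p <- s) f p.1.1 * g p.1.2 * l p.2
                    = \sum_(p <- t) f p.1.1 * g p.1.2 * l p.2.
  move=> f g l; rewrite !big_allpairs_dep /=.
  have E1 : \sum_(p <- Delta h) \sum_(q <- Delta p.1) f q.1 * g q.2 * l p.2
     = \sum_(p <- Delta h) (\sum_(q <- Delta p.1) f q.1 * g q.2) * l p.2.
    by apply: eq_bigr => p _; rewrite mulr_suml.
  have E2 : \sum_(p <- Delta h) \sum_(q <- Delta p.2) f p.1 * g q.1 * l q.2
     = \sum_(p <- Delta h) f p.1 * (\sum_(q <- Delta p.2) g q.1 * l q.2).
    by apply: eq_bigr => p _; rewrite mulr_sumr; apply: eq_bigr => q _; rewrite mulrA.
  rewrite E1 E2; exact: (hopf_coassoc _ _ _ _ _ hH h (lff f) (lff g) (lff l) (lfP f) (lfP g) (lfP l)).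
have := gen3 Hyp hF.
by rewrite !big_allpairs_dep.
Qed.


Variable X : TObj k H Delta S.
Local Notation M := (t_car k H Delta S X).
Local Notation act := (t_act k H Delta S X).
Local Notation T := (t_T k H Delta S X).

Lemma actL h : lin_map k (act h).
Proof. exact: (@hmod_lin _ _ _ _ (t_act_mod _ _ _ _ X) h). Qed.
Lemma actH' a x y m : act (a *: x + y) m = a *: act x m + act y m.
Proof. exact: (@hmod_linH _ _ _ _ (t_act_mod _ _ _ _ X)). Qed.
Lemma actH m : lin_map k (fun h => act h m).
Proof. by move=> a x y; rewrite actH'. Qed.
Lemma TL : lin_map k T.
Proof. exact: (t_T_lin _ _ _ _ X). Qed.
Lemma TL' a x y : T (a *: x + y) = a *: T x + T y.
Proof. exact: (t_T_lin _ _ _ _ X). Qed.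
Lemma SL' a x y : S (a *: x + y) = a *: S x + S y.
Proof. exact: (hopf_S_lin _ _ _ _ _ hH a x y). Qed.
Lemma act_mul x y m : act (x * y) m = act x (act y m).
Proof. exact: (@hmod_mul _ _ _ _ (t_act_mod _ _ _ _ X)). Qed.
Lemma act1 m : act 1 m = m.
Proof. exact: (@hmod_one _ _ _ _ (t_act_mod _ _ _ _ X)). Qed.
Lemma act_sumH (I : Type) (r : seq I) (F : I -> H) m :
  act (\sum_(i <- r) F i) m = \sum_(i <- r) act (F i) m.
Proof. exact: (linm_sum (actH m)). Qed.
Lemma act_sum (I : Type) (r : seq I) (F : I -> M) h :
  act h (\sum_(i <- r) F i) = \sum_(i <- r) act h (F i).
Proof. exact: (linm_sum (actL h)). Qed.
Lemma T_sum (I : Type) (r : seq I) (F : I -> M) :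
  T (\sum_(i <- r) F i) = \sum_(i <- r) T (F i).
Proof. exact: (linm_sum TL). Qed.
Lemma actZH c h m : act (c *: h) m = c *: act h m.
Proof. exact: (linmZ (actH m)). Qed.
Lemma actZ c h m : act h (c *: m) = c *: act h m.
Proof. exact: (linmZ (actL h)). Qed.
Lemma TZ c m : T (c *: m) = c *: T m.
Proof. exact: (linmZ TL). Qed.
Lemma act_scal c m : act (c%:A) m = c *: m.
Proof. by rewrite actZH act1. Qed.

Definition Bop x m := \sum_(p <- Delta x) act (S p.1) (T (act p.2 m)).

Lemma step1 g m : act g (T m) =
  \sum_(q <- Delta g) \sum_(r <- Delta q.1) act r.1 (T (act (S r.2) (act q.2 m))).
Proof.
pose F a b c := act a (T (act (S b) (act c m))).
have hF : trilin F.
  split.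
  - by move=> b c a x y; rewrite /F actH'.
  - by move=> a c x y z; rewrite /F SL' actH' TL' (linmD (actL _)) actZ.
  - by move=> a b x y z; rewrite /F actH' (linmD (actL _)) actZ TL' (linmD (actL _)) actZ.
rewrite (VC hF g) /F.
have E : forall p : H * H, \sum_(q <- Delta p.2) act p.1 (T (act (S q.1) (act q.2 m)))
    = eps p.2 *: act p.1 (T m).
  move=> p; rewrite -actZ -TZ -act_scal -(hopf_antipode_l _ _ _ _ _ hH p.2).
  rewrite act_sumH T_sum act_sum; apply: eq_bigr => q _; by rewrite act_mul.
under [RHS]eq_bigr => p _ do rewrite E.
rewrite -{1}(hopf_counit_r _ _ _ _ _ hH g) act_sumH; apply: eq_bigr => p _.
by rewrite actZH.
Qed.

Lemma step2 g m : T (act g (T m)) =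
  \sum_(q <- Delta g) Tconj k H Delta S act T q.1 (T (act q.2 m)).
Proof.
rewrite step1 T_sum; apply: eq_bigr => q _.
by rewrite (t_T_c k H Delta S X) /Tconj T_sum.
Qed.


Lemma BopL m : lin_map k (fun x => Bop x m).
Proof.
apply: (VDL (G := fun a b => act (S a) (T (act b m)))); split.
- by move=> b a x y; rewrite SL' actH'.
- by move=> a x y z; rewrite actH' TL' (linmD (actL _)) actZ.
Qed.

Lemma mulL' a x y (b : H) : (a *: x + y) * b = a *: (x * b) + y * b.
Proof. by rewrite mulrDl scalerAl. Qed.
Lemma mulR' a x y (b : H) : b * (a *: x + y) = a *: (b * x) + b * y.
Proof. by rewrite mulrDr scalerAr. Qed.

Lemma Bop_T h0 m : Bop h0 (T m) = T (Bop h0 m).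
Proof.
rewrite /Bop.
under eq_bigr => p _ do rewrite step2 /Tconj act_sum.
under eq_bigr => p _ do under eq_bigr => q _ do rewrite act_sum.
have E1 : forall p : H * H,
  \sum_(q <- Delta p.2) \sum_(r <- Delta q.1)
     act (S p.1) (act r.1 (T (act (S r.2) (T (act q.2 m)))))
  = \sum_(q <- Delta p.2) act (S p.1 * q.1) (T (Bop q.2 m)).
  move=> p.
  pose F a b c := act (S p.1) (act a (T (act (S b) (T (act c m))))).
  have hF : trilin F.
    split.
    - by move=> b c a x y; rewrite /F actH' (linmD (actL _)) actZ.
    - by move=> a c x y z; rewrite /F SL' actH' TL' !(linmD (actL _)) !actZ.
    - by move=> a b x y z; rewrite /F actH' TL' (linmD (actL _)) actZ TL'
           !(linmD (actL _)) !actZ.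
  rewrite (VC hF p.2) /F; apply: eq_bigr => q _.
  rewrite act_mul /Bop T_sum !act_sum; apply: eq_bigr => r _.
  by [].
under eq_bigr => p _ do rewrite E1.
pose K a b c := act (S a * b) (T (Bop c m)).
have hK : trilin K.
  split.
  - by move=> b c a x y; rewrite /K SL' mulL' actH'.
  - by move=> a c x y z; rewrite /K mulR' actH'.
  - by move=> a b x y z; rewrite /K (BopL m) TL' (linmD (actL _)) actZ.
have := VC hK h0; rewrite /K => <-.
have E2 : forall p : H * H, \sum_(q <- Delta p.1) act (S q.1 * q.2) (T (Bop p.2 m))
   = eps p.1 *: T (Bop p.2 m).
  move=> p; rewrite -act_scal -(hopf_antipode_l _ _ _ _ _ hH p.1) act_sumH.
  by [].
under eq_bigr => p _ do rewrite E2.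
rewrite -/(Bop h0 m) -{2}(hopf_counit_l _ _ _ _ _ hH h0) (linm_sum (BopL m)) T_sum.
by apply: eq_bigr => p _; rewrite (linmZ (BopL m)) TZ.
Qed.


Local Notation I := (img k H Delta S X).
Local Notation pi := (piT k H Delta S X).

Lemma fixv (v : I) : T (val v) = val v.
Proof. by have := valP v; rewrite /fixT unfold_in => /eqP. Qed.

Lemma val_sum (J : Type) (r : seq J) (F : J -> I) :
  val (\sum_(j <- r) F j) = \sum_(j <- r) val (F j).
Proof. by elim: r => [|j r IH]; rewrite ?big_nil ?big_cons //= -IH. Qed.

Lemma HR : is_partial_rep k H Delta S pi.
Proof.
split.
- move=> h a x y; apply: val_inj => /=.
  by rewrite (linmD (actL _)) actZ TL'.
- move=> a x y v; apply: val_inj => /=.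
  by rewrite actH' TL'.
- by move=> v; apply: val_inj => /=; rewrite act1 fixv.
- move=> h x v; apply: val_inj; rewrite !val_sum /=.
  transitivity (T (act h (T (Tconj k H Delta S act T x (val v))))).
    by rewrite /Tconj T_sum act_sum T_sum.
  transitivity (T (act h (Tconj k H Delta S act T x (val v)))); last first.
    by rewrite /Tconj act_sum T_sum; apply: eq_bigr => p _; rewrite act_mul.
  by rewrite -(t_T_c k H Delta S X) fixv.
- move=> h x v; apply: val_inj; rewrite !val_sum /=.
  transitivity (T (Tconj k H Delta S act T h (T (act x (val v))))).
    by rewrite /Tconj T_sum.
  transitivity (T (Tconj k H Delta S act T h (act x (val v)))); last first.
    by rewrite /Tconj T_sum; apply: eq_bigr => p _; rewrite act_mul.
  by rewrite (t_T_c k H Delta S X) (t_T_idem k H Delta S X).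
- move=> h x v; apply: val_inj; rewrite !val_sum /=.
  transitivity (T (act h (T (Bop x (val v))))).
    by rewrite /Bop T_sum act_sum T_sum.
  transitivity (T (act h (Bop x (val v)))); last first.
    by rewrite /Bop act_sum T_sum; apply: eq_bigr => p _; rewrite act_mul.
  by rewrite -Bop_T fixv.
- move=> h x v; apply: val_inj; rewrite !val_sum /=.
  transitivity (T (Bop h (T (act x (val v))))).
    by rewrite /Bop T_sum.
  transitivity (T (Bop h (act x (val v)))); last first.
    by rewrite /Bop T_sum; apply: eq_bigr => p _; rewrite act_mul.
  by rewrite Bop_T (t_T_idem k H Delta S X).
Qed.

End Hopf.

From mathcomp Require Import functions.
Unset Implicit Arguments.

Lemma fapD (k : fieldType) (T : Type) (W : lmodType k) (f g : T -> W) x : (f + g) x = f x + g x.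
Proof. by []. Qed.
Lemma fapZ (k : fieldType) (T : Type) (W : lmodType k) a (f : T -> W) x : (a *: f) x = a *: f x.
Proof. by []. Qed.

Section Glob.
Variable k : fieldType.
Variable H : algType k.
Variables (Delta : H -> seq (H * H)) (S : H -> H).

Definition Pcond (A : PMod k H Delta S) (f : H -> p_car _ _ _ _ A) :=
  forall g h, \sum_(p <- Delta h) p_pi _ _ _ _ A p.1 (f (S p.2 * g))
            = \sum_(p <- Delta h) p_pi _ _ _ _ A p.1 (p_pi _ _ _ _ A (S p.2) (f g)).

Definition gpred (A : PMod k H Delta S) : {pred (H -> p_car _ _ _ _ A)} :=
  fun f => `[< lin_map k f /\ Pcond A f >].

Section PA.
Variable A : PMod k H Delta S.
Local Notation V := (p_car k H Delta S A).
Local Notation pi := (p_pi k H Delta S A).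
Lemma piL' h a x y : pi h (a *: x + y) = a *: pi h x + pi h y.
Proof. exact: (prep_lin _ _ _ _ _ (p_ax _ _ _ _ A)). Qed.
Lemma piL h : lin_map k (pi h).
Proof. by move=> a x y; rewrite piL'. Qed.
Lemma piH' a x y v : pi (a *: x + y) v = a *: pi x v + pi y v.
Proof. exact: (prep_linH _ _ _ _ _ (p_ax _ _ _ _ A)). Qed.
Lemma pi1 v : pi 1 v = v.
Proof. exact: (prep_one _ _ _ _ _ (p_ax _ _ _ _ A)). Qed.

Lemma gpred_submod : GRing.submod_closed (gpred A).
Proof.
split.
  rewrite unfold_in; apply/asboolP; split.
    by move=> a x y /=; rewrite scaler0 addr0.
  by move=> g h; apply: eq_bigr => p _ /=; rewrite !(linm0 (piL _)).
move=> a f g; rewrite !unfold_in => /asboolP [lf Pf] /asboolP [lg Pg].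
apply/asboolP; split.
  move=> b x y; rewrite !fapD !fapZ lf lg.
  by rewrite !scalerDr !scalerA addrACA [a * b]mulrC.
have E : forall h0 (F1 F2 : H * H -> V),
    \sum_(p <- Delta h0) pi p.1 (a *: F1 p + F2 p)
    = a *: \sum_(p <- Delta h0) pi p.1 (F1 p) + \sum_(p <- Delta h0) pi p.1 (F2 p).
  move=> h0 F1 F2; rewrite scaler_sumr -big_split; apply: eq_bigr => p _.
  by rewrite piL'.
move=> g' h.
under eq_bigr => p _ do rewrite fapD fapZ.
rewrite E Pf Pg -E; apply: eq_bigr => p _.
by rewrite fapD fapZ (piL' (S p.2)).
Qed.
End PA.

HB.instance Definition _ (A : PMod k H Delta S) :=
  GRing.isSubmodClosed.Build k (H -> p_car _ _ _ _ A) (gpred A) (gpred_submod A).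

Definition Gc (A : PMod k H Delta S) := {f : H -> p_car _ _ _ _ A | f \in gpred A}.
HB.instance Definition _ A := [isSub for (@proj1_sig _ _ : Gc A -> (H -> p_car _ _ _ _ A))].
HB.instance Definition _ A := [Choice of Gc A by <:].
HB.instance Definition _ A := [SubChoice_isSubLmodule of Gc A by <:].


Lemma fapSum (T : Type) (W : lmodType k) (J : Type) (r : seq J) (F : J -> T -> W) x :
  (\sum_(j <- r) F j) x = \sum_(j <- r) F j x.
Proof. by rewrite fct_sumE. Qed.

Section PB.
Variable A : PMod k H Delta S.
Local Notation V := (p_car k H Delta S A).
Local Notation pi := (p_pi k H Delta S A).
Local Notation G := (Gc A).

Lemma gP (f : G) : lin_map k (val f) /\ Pcond A (val f).
Proof. by have := valP f; rewrite unfold_in => /asboolP. Qed.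

Lemma gval_sum (J : Type) (r : seq J) (F : J -> G) :
  val (\sum_(j <- r) F j) = \sum_(j <- r) val (F j).
Proof. by elim: r => [|j r IH]; rewrite ?big_nil ?big_cons //= -IH. Qed.

Lemma gact_in h (f : G) : (fun y => val f (y * h)) \in gpred A.
Proof.
rewrite unfold_in; apply/asboolP; split.
  by move=> a x y /=; rewrite mulrDl -scalerAl (gP f).1.
move=> g h' /=; rewrite -(gP f).2; apply: eq_bigr => p _; by rewrite mulrA.
Qed.

Definition gact h (f : G) : G := Sub (fun y => val f (y * h)) (gact_in h f).

Definition fv (v : V) := fun y => pi y v.

Lemma fvE v y : fv v y = pi y v.
Proof. by []. Qed.

Lemma fv_in v : fv v \in gpred A.
Proof.
rewrite unfold_in; apply/asboolP; split.
  by move=> a x y; rewrite /fv (piH' A).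
move=> g h; rewrite /fv.
by rewrite (prep_ax2 _ _ _ _ _ (p_ax _ _ _ _ A)).
Qed.

Definition gT (f : G) : G := Sub (fv (val f 1)) (fv_in (val f 1)).

Lemma gact_mod : is_Hmod k H gact.
Proof.
split.
- move=> h a x y; apply: val_inj; apply/funext => z /=.
  by rewrite !fapD !fapZ.
- move=> a x y m; apply: val_inj; apply/funext => z /=.
  by rewrite fapD fapZ mulrDr -scalerAr (gP m).1.
- by move=> m; apply: val_inj; apply/funext => z /=; rewrite mulr1.
- by move=> x y m; apply: val_inj; apply/funext => z /=; rewrite mulrA.
Qed.

Lemma gT_lin : lin_map k gT.
Proof.
move=> a x y; apply: val_inj; apply/funext => z /=.
by rewrite /fv !fapD !fapZ (piL' A).
Qed.

Lemma gT_idem m : gT (gT m) = gT m.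
Proof. by apply: val_inj; apply/funext => z /=; rewrite /fv (pi1 A). Qed.

Lemma gT_c h m : Tconj k H Delta S gact gT h (gT m) = gT (Tconj k H Delta S gact gT h m).
Proof.
apply: val_inj; apply/funext => z; rewrite /Tconj /= !gval_sum fapSum /fv.
rewrite fapSum /=.
under eq_bigr => p _ do rewrite !fvE mul1r.
rewrite (linm_sum (piL A z)).
under [RHS]eq_bigr => p _ do rewrite !fvE !mul1r.
rewrite -(prep_ax1 _ _ _ _ _ (p_ax _ _ _ _ A)) -!(linm_sum (piL A z)); congr (pi z _).
have := (gP m).2 1 h; under eq_bigr => p _ do rewrite mulr1.
by move=> ->.
Qed.

Definition Gobj : TObj k H Delta S :=
  Build_TObj k H Delta S (Gc A) gact gact_mod gT gT_lin gT_idem gT_c.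


Local Notation Im := (img k H Delta S Gobj).

Definition gemb0 (v : V) : G := Sub (fv v) (fv_in v).

Lemma gemb0_fix v : gemb0 v \in fixT k H Delta S Gobj.
Proof.
rewrite /fixT unfold_in; apply/eqP; apply: val_inj; apply/funext => z /=.
by rewrite !fvE (pi1 A).
Qed.

Definition emb (v : V) : Im := Sub (gemb0 v) (gemb0_fix v).
Definition ev (f : Im) : V := val (val f) 1.

Lemma E1 v : ev (emb v) = v.
Proof. by rewrite /ev /= fvE (pi1 A). Qed.

Lemma E2 f : emb (ev f) = f.
Proof.
have fx : gT (val f) = val f.
  by have := valP f; rewrite /fixT unfold_in => /eqP.
apply: val_inj; rewrite -[RHS]fx; apply: val_inj => /=.
by [].
Qed.

Lemma E3 h v : piT k H Delta S Gobj h (emb v) = emb (pi h v).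
Proof.
apply: val_inj; apply: val_inj; apply/funext => z /=.
by rewrite !fvE mul1r.
Qed.

Lemma E4 : lin_map k emb.
Proof.
move=> a v w; apply: val_inj; apply: val_inj; apply/funext => z /=.
by rewrite fapD fapZ !fvE (piL' A).
Qed.

Lemma E5 : lin_map k ev.
Proof. by []. Qed.

Lemma E6 h f : ev (piT k H Delta S Gobj h f) = pi h (ev f).
Proof. by rewrite -{1}(E2 f) E3 E1. Qed.

End PB.
End Glob.

Theorem mainTheorem2 (k : fieldType) (H : algType k)
  (Delta : H -> seq (H * H)) (eps : H -> k) (S : H -> H)
  (hH : is_hopf k H Delta eps S) (hS : bijective S) :
  exists HR : forall X : TObj k H Delta S, is_partial_rep k H Delta S (piT k H Delta S X),
    is_equivalence (Hom_T k H Delta S) (Hom_P k H Delta S)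
      (fun X => Build_PMod k H Delta S (img k H Delta S X) (piT k H Delta S X) (HR X))
      (fun X Y (f : img k H Delta S X -> img k H Delta S Y) => f).
Proof.
exists (fun X => HR hH X).
pose Fo := fun X => Build_PMod k H Delta S (img k H Delta S X) (piT k H Delta S X) (HR hH X).
pose Go := Gobj k H Delta S.
pose Gm := fun (A B : PMod k H Delta S) (g : p_car _ _ _ _ A -> p_car _ _ _ _ B)
  (f : img k H Delta S (Go A)) => emb k H Delta S B (g (ev k H Delta S A f)).
split.
  split.
  - move=> X Y f [lf hf]; split => // h m; apply: val_inj; exact: hf.
  - by [].
  - by [].
exists Go, Gm; split.
  split.
  - move=> A B g [lg hg]; split.
      move=> a x y; rewrite /Gm (E5 k H Delta S A) lg.
      exact: (E4 k H Delta S B).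
    move=> h f; rewrite /Gm E6 hg -E3 /=.
    by [].
  - by move=> A f; rewrite /Gm E2.
  - by move=> A B C f g _ _ x; rewrite /Gm /= E1.
split.
  exists (fun X => emb k H Delta S (Fo X)); split.
    move=> X; split.
      split; first exact: (E4 k H Delta S (Fo X)).
      move=> h m; rewrite -E3; by [].
    exists (ev k H Delta S (Fo X)); split.
    - split; first exact: (E5 k H Delta S (Fo X)).
      move=> h f; rewrite E6; by [].
    - by move=> m; rewrite /= E1.
    - by move=> f; rewrite /= E2.
  by move=> X Y f _ m; rewrite /Gm /= E1.
exists (fun A => ev k H Delta S A); split.
  move=> A; split.
    split; first exact: (E5 k H Delta S A).
    by move=> h f; rewrite E6.
  exists (emb k H Delta S A); split.
  - split; first exact: (E4 k H Delta S A).
    by move=> h v; rewrite -E3.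
  - by move=> f; rewrite /= E2.
  - by move=> v; rewrite /= E1.
by move=> A B g _ f; rewrite /Gm /= E1.
Qed.
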